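(* Let $H(s)=K\,\frac{\prod_{i=1}^{m}(s-z_i)}{\prod_{i=1}^{n}(s-p_i)}$ be a rational function with real coefficients, where $K\neq 0$ is real, $z\in\mathbb{C}^m$ are its zeros and $p\in\mathbb{C}^n$ its poles. If $H$ is logarithmically completely monotonic, then: (a) $n\geq m$; (b) $\max_i \operatorname{Re}(p_i)\geq \max_i \operatorname{Re}(z_i)$; (c) if $n=m$, then $\sum_{i=1}^n p_i\geq \sum_{i=1}^m z_i$.
   Context: Let $\sigma(H)=\max_i \operatorname{Re}(p_i)$. A function $H$ is logarithmically completely monotonic (LCM) on $I\subseteq\mathbb{R}$ if $H(s)>0$ and $(-1)^k[\log H(s)]^{(k)}\geq 0$ for all $k\in\{1,2,\dots\}$ and all $s\in I$. ''$H$ is LCM'' means LCM on $I=(\sigma(H),+\infty)$. *)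

(* Defs.v *)
From HB Require Import structures.
From mathcomp Require Import all_boot all_order all_algebra.
From mathcomp Require Import all_classical all_reals all_analysis.
From mathcomp Require Import complex.
Set Implicit Arguments. Unset Strict Implicit. Unset Printing Implicit Defensive.
Import Order.TTheory GRing.Theory Num.Theory.
Local Open Scope ring_scope.
Local Open Scope complex_scope.

Definition root_poly (R : realType) (k : nat) (r : 'I_k -> R[i]) : {poly R[i]} :=
  \prod_(i < k) ('X - (r i)%:P).

Definition real_coef_poly (R : realType) (q : {poly R[i]}) : Prop :=
  forall j : nat, complex.Im (q`_j) = 0.

Definition ratH (R : realType) (m n : nat) (K : R) (z : 'I_m -> R[i])
  (p : 'I_n -> R[i]) (s : R[i]) : R[i] :=
  K%:C * (\prod_(i < m) (s - z i)) / (\prod_(i < n) (s - p i)).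

(* Restriction of H to real arguments (real part; H is real there when
   the coefficients are real). *)
Definition ratH_real (R : realType) (m n : nat) (K : R) (z : 'I_m -> R[i])
  (p : 'I_n -> R[i]) (s : R) : R :=
  complex.Re (ratH K z p s%:C).

(* max_i Re(r_i) in the extended reals (-oo for an empty family). *)
Definition max_re (R : realType) (k : nat) (r : 'I_k -> R[i]) : \bar R :=
  \big[Order.max/-oo%E]_(i < k) (complex.Re (r i))%:E.

Definition sigmaH (R : realType) (n : nat) (p : 'I_n -> R[i]) : \bar R :=
  max_re p.

Definition LCM_on (R : realType) (f : R -> R) (I : set R) : Prop :=
  forall s, I s ->
    0 < f s /\
    forall k : nat, (0 < k)%N ->
      0 <= (-1) ^+ k * derive1n k (fun x => ln (f x)) s.

Definition LCM_H (R : realType) (m n : nat) (K : R) (z : 'I_m -> R[i])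
  (p : 'I_n -> R[i]) : Prop :=
  LCM_on (ratH_real K z p) [set s : R | (sigmaH p < s%:E)%E].

(* Main.v *)
Require Import Defs.
From HB Require Import structures.
From mathcomp Require Import all_boot all_order all_algebra.
From mathcomp Require Import all_classical all_reals all_analysis.
From mathcomp Require Import complex.
From mathcomp Require Import ring lra.
Set Implicit Arguments. Unset Strict Implicit. Unset Printing Implicit Defensive.
Import Order.TTheory GRing.Theory Num.Theory.
Import numFieldNormedType.Exports.
Local Open Scope ring_scope.
Local Open Scope complex_scope.

Notation cRe := complex.Re.
Notation cIm := complex.Im.

Section C.
Variable R : realType.
Implicit Types x y : R[i].
Lemma cReM x y : cRe (x * y) = cRe x * cRe y - cIm x * cIm y.
Proof. by case: x => a b; case: y => c d. Qed.
Lemma cImM x y : cIm (x * y) = cRe x * cIm y + cIm x * cRe y.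
Proof. by case: x => a b; case: y => c d. Qed.
Lemma cReD x y : cRe (x + y) = cRe x + cRe y.
Proof. by case: x => a b; case: y => c d. Qed.
Lemma cImD x y : cIm (x + y) = cIm x + cIm y.
Proof. by case: x => a b; case: y => c d. Qed.
Lemma cReN x : cRe (- x) = - cRe x.
Proof. by case: x => a b. Qed.
Lemma cImN x : cIm (- x) = - cIm x.
Proof. by case: x => a b. Qed.
Lemma cReV x : cRe (x^-1) = cRe x / (cRe x ^+ 2 + cIm x ^+ 2).
Proof. by case: x => a b. Qed.
Lemma cImV x : cIm (x^-1) = - (cIm x / (cRe x ^+ 2 + cIm x ^+ 2)).
Proof. by case: x => a b. Qed.
Lemma cReC (r : R) : cRe r%:C = r. Proof. by []. Qed.
Lemma cImC (r : R) : cIm r%:C = 0. Proof. by []. Qed.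
Lemma cRe_sum n (F : 'I_n -> R[i]) : cRe (\sum_(i < n) F i) = \sum_(i < n) cRe (F i).
Proof. elim/big_ind2: _ => //= a b c d <- <-; exact: cReD. Qed.
Lemma cIm_sum n (F : 'I_n -> R[i]) : cIm (\sum_(i < n) F i) = \sum_(i < n) cIm (F i).
Proof. elim/big_ind2: _ => //= a b c d <- <-; exact: cImD. Qed.
Lemma cReMn x k : cRe (x *+ k) = cRe x *+ k.
Proof. by elim: k => [|k IH]; rewrite ?mulr0n // !mulrS cReD IH. Qed.
Lemma cImMn x k : cIm (x *+ k) = cIm x *+ k.
Proof. by elim: k => [|k IH]; rewrite ?mulr0n // !mulrS cImD IH. Qed.
End C.

Section Deriv.
Variable R : realType.

Lemma deriv_div (f g : R -> R) x df dg : g x != 0 ->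
  is_derive x 1 f df -> is_derive x 1 g dg ->
  is_derive x 1 (fun y => f y / g y) ((df * g x - f x * dg) / (g x)^+2).
Proof.
move=> gx0 hf hg.
have hV := is_deriveV gx0 hg.
have hM := is_deriveM hf hV.
eapply is_derive_eq; [exact: hM|].
rewrite /= /GRing.scale /=. field. done.
Qed.


Definition uu (a : R[i]) (y : R) : R[i] := (y%:C - a)^-1.
Definition DD (a : R[i]) (y : R) : R := (y - cRe a) ^+ 2 + cIm a ^+ 2.

Lemma ReU a y : cRe (uu a y) = (y - cRe a) / DD a y.
Proof. by rewrite /uu cReV cReD cImD cReN cImN /DD /= add0r sqrrN. Qed.
Lemma ImU a y : cIm (uu a y) = cIm a / DD a y.
Proof. by rewrite /uu cImV cReD cImD cReN cImN /DD /= add0r sqrrN mulNr opprK. Qed.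

Lemma DD_ge0 a y : 0 <= DD a y.
Proof. by rewrite /DD addr_ge0 ?sqr_ge0. Qed.

Lemma DD_eq0 a y : (DD a y == 0) = (y%:C == a).
Proof.
rewrite /DD paddr_eq0 ?sqr_ge0 // !sqrf_eq0 subr_eq0.
by case: a => p q /=; rewrite eq_complex /= eq_sym [0 == q]eq_sym.
Qed.

Lemma is_derive_lin (c : R) (y : R) : is_derive y 1 (fun t : R => t - c) 1.
Proof.
have h1 : is_derive y 1 (@id R) 1 := is_derive_id y 1.
have h2 : is_derive y 1 (cst c) 0 := is_derive_cst c y 1.
have h := is_deriveB h1 h2.
eapply is_derive_eq; [exact: h|].
by rewrite subr0.
Qed.

Lemma is_derive_DD (a : R[i]) (y : R) : is_derive y 1 (DD a) (2 * (y - cRe a)).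
Proof.
rewrite /DD.
have h1 := is_deriveX 2 (is_derive_lin (cRe a) y).
have h2 : is_derive y 1 (cst (cIm a ^+ 2)) 0 := is_derive_cst _ y 1.
have h := is_deriveD h1 h2.
eapply is_derive_eq; [exact: h|].
rewrite /= /GRing.scale /=. ring.
Qed.

Lemma is_derive_ReU (a : R[i]) (y : R) : DD a y != 0 ->
  is_derive y 1 (fun t => cRe (uu a t)) (cRe (- (uu a y) ^+ 2)).
Proof.
move=> D0.
have -> : (fun t => cRe (uu a t)) = (fun t => (t - cRe a) / DD a t).
  by apply/funext => t; rewrite ReU.
eapply is_derive_eq; [exact: (deriv_div D0 (is_derive_lin _ _) (is_derive_DD a y))|].
rewrite cReN expr2 cReM ReU ImU /DD. field. by rewrite -/(DD a y).
Qed.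

Lemma is_derive_ImU (a : R[i]) (y : R) : DD a y != 0 ->
  is_derive y 1 (fun t => cIm (uu a t)) (cIm (- (uu a y) ^+ 2)).
Proof.
move=> D0.
have -> : (fun t => cIm (uu a t)) = (fun t => cIm a / DD a t).
  by apply/funext => t; rewrite ImU.
eapply is_derive_eq; [exact: (deriv_div D0 (is_derive_cst (cIm a) y 1) (is_derive_DD a y))|].
rewrite cImN expr2 cImM ReU ImU /DD. field. by rewrite -/(DD a y).
Qed.


Lemma is_derive_Uk (a : R[i]) (y : R) k : DD a y != 0 ->
  is_derive y 1 (fun t => cRe (uu a t ^+ k)) (cRe (- (uu a y ^+ k.+1) *+ k)) /\
  is_derive y 1 (fun t => cIm (uu a t ^+ k)) (cIm (- (uu a y ^+ k.+1) *+ k)).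
Proof.
move=> D0; elim: k => [|k [IHr IHi]].
  have -> : (fun t => cRe (uu a t ^+ 0)) = cst 1 by apply/funext => t; rewrite expr0.
  have -> : (fun t => cIm (uu a t ^+ 0)) = cst 0 by apply/funext => t; rewrite expr0.
  by rewrite mulr0n; split; exact: is_derive_cst.
have hr := is_derive_ReU D0; have hi := is_derive_ImU D0.
have eq : - (uu a y ^+ k.+2) *+ k.+1 =
   uu a y * (- (uu a y ^+ k.+1) *+ k) + uu a y ^+ k * (- (uu a y) ^+ 2).
  move: (uu a y) => w. rewrite !exprS. ring.
split.
- have -> : (fun t => cRe (uu a t ^+ k.+1)) =
     (fun t => cRe (uu a t)) * (fun t => cRe (uu a t ^+ k)) -
     (fun t => cIm (uu a t)) * (fun t => cIm (uu a t ^+ k)).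
    by apply/funext => t; rewrite exprS cReM.
  have h := is_deriveB (is_deriveM hr IHr) (is_deriveM hi IHi).
  eapply is_derive_eq; [exact: h|].
  by rewrite eq cReD !cReM /GRing.scale /= opprD addrACA.
- have -> : (fun t => cIm (uu a t ^+ k.+1)) =
     (fun t => cRe (uu a t)) * (fun t => cIm (uu a t ^+ k)) +
     (fun t => cIm (uu a t)) * (fun t => cRe (uu a t ^+ k)).
    by apply/funext => t; rewrite exprS cImM.
  have h := is_deriveD (is_deriveM hr IHi) (is_deriveM hi IHr).
  eapply is_derive_eq; [exact: h|].
  rewrite eq cImD !cImM /GRing.scale /= addrACA; congr (_ + _); exact: addrC.
Qed.


Definition ell (a : R[i]) (y : R) : R := 2^-1 * ln (DD a y).

Lemma is_derive_ell (a : R[i]) (y : R) : 0 < DD a y ->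
  is_derive y 1 (ell a) (cRe (uu a y)).
Proof.
move=> D0.
have h1 := is_derive1_ln D0.
have h2 := is_derive1_comp h1 (is_derive_DD a y).
have h3 := is_deriveZ (2^-1) h2.
eapply is_derive_eq; [exact: h3|].
rewrite ReU /GRing.scale /=. field. by rewrite gt_eqF.
Qed.

Lemma iter_deriv (V : set R) (G : R -> R) (F : nat -> R -> R) :
  (forall x, V x -> \forall y \near x, V y) ->
  (forall x, V x -> G x = F 0%N x) ->
  (forall k x, V x -> is_derive x 1 (F k) (F k.+1 x)) ->
  forall k x, V x -> derive1n k G x = F k x.
Proof.
move=> Vo G0 dF; elim=> [|k IH] x Vx; first by rewrite derive1n0 G0.
rewrite derive1nS derive1E.
rewrite (@near_eq_derive _ _ _ _ (F k)).
  by have [_ ->] := dF k x Vx.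
near=> y. apply: IH. near: y. exact: Vo.
Unshelve. all: end_near.
Qed.

End Deriv.

Section Real.
Variable R : realType.

Lemma Im_real_poly (q : {poly R[i]}) (x : R) :
  (forall j, cIm (q`_j) = 0) -> cIm (q.[x%:C]) = 0.
Proof.
move=> hq; rewrite horner_coef cIm_sum big1 // => i _.
by rewrite cImM hq -rmorphXn /= mulr0 mul0r addr0.
Qed.

Lemma prodXE n (r : 'I_n -> R[i]) (x : R) :
  (\prod_(i < n) ('X - (r i)%:P)).[x%:C] = \prod_(i < n) (x%:C - r i).
Proof. by rewrite horner_prod; apply: eq_bigr => i _; rewrite hornerXsubC. Qed.

Lemma real_eqC (w : R[i]) : cIm w = 0 -> w = (cRe w)%:C.
Proof. by case: w => a b /= ->. Qed.

Lemma sq_prod n (r : 'I_n -> R[i]) (x : R) :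
  cIm (\prod_(i < n) (x%:C - r i)) = 0 ->
  cRe (\prod_(i < n) (x%:C - r i)) ^+ 2 = \prod_(i < n) DD (r i) x.
Proof.
set P := \prod_(i < n) _ => hI.
apply: (@complexI R); rewrite rmorphXn /= -real_eqC // rmorph_prod /=.
have -> : P ^+ 2 = P * conjc P.
  by rewrite expr2; congr (_ * _); rewrite (real_eqC hI) conjc_real.
rewrite /P rmorph_prod -big_split /=; apply: eq_bigr => i _.
by case: (r i) => a b; rewrite /DD /=; simpc; congr (_ +i* _); ring.
Qed.

Lemma ln_prod n (F : 'I_n -> R) : (forall i, 0 < F i) ->
  0 < \prod_(i < n) F i /\ ln (\prod_(i < n) F i) = \sum_(i < n) ln (F i).
Proof.
move=> hF; apply: (big_rec2 (fun s p => 0 < p /\ ln p = s)).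
  by rewrite ln1.
move=> i s p _ [p0 <-]; split; first by rewrite mulr_gt0.
by rewrite lnM // posrE.
Qed.

End Real.


Lemma Im_sum_roots (R : realType) m (z : 'I_m -> R[i]) :
  real_coef_poly (root_poly z) -> cIm (\sum_(i < m) z i) = 0.
Proof.
move=> H.
case: m z H => [|m] z H; first by rewrite big_ord0.
have := H m.
rewrite /root_poly -(big_map z xpredT (fun x => 'X - x%:P)).
have sz : size (map z (index_enum 'I_m.+1)) = m.+1.
  rewrite size_map; first [by rewrite -enumT -cardT card_ord | by rewrite /index_enum -enumT -cardT card_ord | by rewrite unlock /= -enumT -cardT card_ord | idtac].
have := @coefPn_prod_XsubC _ (map z (index_enum 'I_m.+1)).
rewrite sz /= => -> //.
by rewrite big_map cImN => /eqP; rewrite oppr_eq0 => /eqP.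
Qed.


Section Dhelp.
Variable R : realType.
Lemma is_derive_sumf n (h : 'I_n -> R -> R) (x : R) (dh : 'I_n -> R) :
  (forall i, is_derive x 1 (h i) (dh i)) ->
  is_derive x 1 (fun y => \sum_(i < n) h i y) (\sum_(i < n) dh i).
Proof. by move=> H; have := is_derive_sum H; rewrite fct_sumE. Qed.
Lemma is_derive_addf (f g : R -> R) (x df dg : R) :
  is_derive x 1 f df -> is_derive x 1 g dg -> is_derive x 1 (fun y => f y + g y) (df + dg).
Proof. by move=> hf hg; have h := is_deriveD hf hg; eapply is_derive_eq; [exact: h|]. Qed.
Lemma is_derive_subf (f g : R -> R) (x df dg : R) :
  is_derive x 1 f df -> is_derive x 1 g dg -> is_derive x 1 (fun y => f y - g y) (df - dg).
Proof. by move=> hf hg; have h := is_deriveB hf hg; eapply is_derive_eq; [exact: h|]. Qed.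
Lemma is_derive_mulcf (c : R) (f : R -> R) (x df : R) :
  is_derive x 1 f df -> is_derive x 1 (fun y => c * f y) (c * df).
Proof. by move=> hf; have h := is_deriveZ c hf; eapply is_derive_eq; [exact: h|]. Qed.
Lemma is_derive_cstf (c : R) (x : R) : is_derive x 1 (fun _ : R => c) 0.
Proof. exact: is_derive_cst. Qed.

Lemma le_sum_nonneg n (F : 'I_n -> R) j : (forall i, 0 <= F i) -> F j <= \sum_(i < n) F i.
Proof.
move=> h; rewrite (bigD1 j) //= lerDl; apply: sumr_ge0 => i _; exact: h.
Qed.

Lemma uu_bound (c a : R[i]) (s : R) : 1 <= s - cRe a ->
  `|cRe (c * uu a s)| <= (`|cRe c| + `|cIm c| * `|cIm a|) / (s - cRe a).
Proof.
move=> t1.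
have tp : 0 < s - cRe a by apply: lt_le_trans t1.
have Dp : 0 < DD a s by rewrite /DD ltr_wpDr ?sqr_ge0 // exprn_gt0.
have -> : cRe (c * uu a s) = (cRe c * (s - cRe a) - cIm c * cIm a) / DD a s.
  by rewrite cReM ReU ImU; field; rewrite gt_eqF.
rewrite normrM normfV (gtr0_norm Dp) ler_pdivrMr // mulrAC ler_pdivlMr //.
rewrite /DD.
set t := s - cRe a.
have e1 : `|cRe c * t - cIm c * cIm a| <= `|cRe c| * t + `|cIm c| * `|cIm a|.
  by apply: le_trans (ler_normB _ _) _; rewrite !normrM (gtr0_norm tp).
have hg := normr_ge0 (cRe c); have hd := normr_ge0 (cIm c); have hb := normr_ge0 (cIm a).
have hb2 : `|cIm a| ^+ 2 = cIm a ^+ 2 by rewrite real_normK // num_real.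
rewrite -hb2.
move: e1 hg hd hb; move: (`|cRe c|) (`|cIm c|) (`|cIm a|) (`|_ - _|) => g d b N e1 hg hd hb.
have t2 : t <= t ^+ 2 by rewrite expr2 ler_peMl // ltW.
have t0 : 0 <= t by rewrite ltW.
have h1 : N * t <= (g * t + d * b) * t by rewrite ler_wpM2r.
have db0 : 0 <= d * b by rewrite mulr_ge0.
have h2 : d * b * t <= d * b * (t ^+ 2 + b ^+ 2).
  by rewrite ler_wpM2l // ler_wpDr ?sqr_ge0.
have h3 : 0 <= g * b ^+ 2 by rewrite mulr_ge0 ?sqr_ge0.
have h4 : g * t * t = g * t ^+ 2 by rewrite expr2 mulrA.
nra.
Qed.

Lemma eps_bound (eps : R) (c a : R[i]) (s : R) : 0 < eps ->
  1 + (`|cRe c| + `|cIm c| * `|cIm a|) / eps + `|cRe a| <= s ->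
  `|cRe (c * uu a s)| <= eps.
Proof.
move=> e0 hs.
set C := `|cRe c| + `|cIm c| * `|cIm a| in hs *.
have C0 : 0 <= C by rewrite addr_ge0 ?mulr_ge0.
have Ce : 0 <= C / eps by rewrite divr_ge0 // ltW.
have t1 : 1 + C / eps <= s - cRe a.
  have := ler_norm (cRe a); lra.
have t1p : 1 <= s - cRe a by apply: le_trans t1; lra.
apply: le_trans (uu_bound c t1p) _.
have tp : 0 < s - cRe a by lra.
rewrite ler_pdivrMr //.
have h := ler_wpM2l (ltW e0) t1.
have : eps * (1 + C / eps) = eps + C by rewrite mulrDr mulr1 mulrC mulfVK // gt_eqF.
rewrite -/C; lra.
Qed.

Lemma sum_abs_bound N (F : 'I_N -> R) e : (forall i, `|F i| <= e) ->
  - (N%:R * e) <= \sum_(i < N) F i /\ \sum_(i < N) F i <= N%:R * e.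
Proof.
move=> h.
have : `|\sum_(i < N) F i| <= N%:R * e.
  apply: le_trans (ler_norm_sum _ _ _) _.
  have -> : N%:R * e = \sum_(i < N) e by rewrite sumr_const card_ord mulr_natl.
  by apply: ler_sum => i _; exact: h.
by rewrite ler_norml => /andP[].
Qed.

Lemma cReMs (s : R) (w : R[i]) : cRe (s%:C * w) = s * cRe w.
Proof. by case: w => a b; rewrite /= mul0r subr0. Qed.

Lemma suu (a : R[i]) (s : R) : DD a s != 0 ->
  s * cRe (uu a s) = 1 + cRe (a * uu a s).
Proof.
rewrite DD_eq0 -subr_eq0 => D0.
have -> : s * cRe (uu a s) = cRe (s%:C * uu a s) by rewrite cReM /= mul0r subr0.
have -> : s%:C * uu a s = 1 + a * uu a s.
  by rewrite /uu -[X in X * _](subrK a) mulrDl divff.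
by rewrite cReD.
Qed.

Lemma s2uu (a : R[i]) (s : R) : DD a s != 0 ->
  s * (s * cRe (uu a s)) = s + cRe a + cRe (a ^+ 2 * uu a s).
Proof.
move=> D0; rewrite suu // mulrDr mulr1 -addrA; congr (_ + _).
have -> : s * cRe (a * uu a s) = cRe (a * (s%:C * uu a s)) by
  rewrite mulrCA cReMs.
have -> : s%:C * uu a s = 1 + a * uu a s.
  move: D0; rewrite DD_eq0 -subr_eq0 => D0.
  by rewrite /uu -[X in X * _](subrK a) mulrDl divff.
by rewrite mulrDr mulr1 cReD mulrA expr2.
Qed.

End Dhelp.

Section Main.
Variable R : realType.
Variables (m n : nat) (K : R) (z : 'I_m -> R[i]) (p : 'I_n -> R[i]).
Hypothesis K0 : K != 0.
Hypothesis Hz : real_coef_poly (root_poly z).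
Hypothesis Hp : real_coef_poly (root_poly p).

Let Pz x := \prod_(i < m) (x%:C - z i).
Let Pp x := \prod_(j < n) (x%:C - p j).

Lemma ImPz x : cIm (Pz x) = 0.
Proof. by rewrite /Pz -prodXE; apply: Im_real_poly; exact: Hz. Qed.
Lemma ImPp x : cIm (Pp x) = 0.
Proof. by rewrite /Pp -prodXE; apply: Im_real_poly; exact: Hp. Qed.

Lemma fE x : ratH_real K z p x = K * cRe (Pz x) / cRe (Pp x).
Proof.
rewrite /ratH_real /ratH -/(Pz x) -/(Pp x).
by rewrite (real_eqC (ImPz x)) (real_eqC (ImPp x)) -fmorphV -!rmorphM.
Qed.

Definition F0 x := 2^-1 * ln (K ^+ 2) + \sum_(i < m) ell (z i) x - \sum_(j < n) ell (p j) x.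

Lemma pos_DD x : 0 < ratH_real K z p x ->
  [/\ forall i, 0 < DD (z i) x, forall j, 0 < DD (p j) x &
      ln (ratH_real K z p x) = F0 x].
Proof.
move=> fpos; rewrite fE in fpos *.
have A0 : cRe (Pz x) != 0 by apply: contraTneq fpos => ->; rewrite mulr0 mul0r ltxx.
have B0 : cRe (Pp x) != 0 by apply: contraTneq fpos => ->; rewrite invr0 mulr0 ltxx.
have sz := sq_prod (ImPz x); have sp := sq_prod (ImPp x).
have hz : forall i, 0 < DD (z i) x.
  move=> i; rewrite lt_def DD_ge0 andbT.
  apply: contra A0 => /eqP Di; rewrite -sqrf_eq0 -/(Pz x) sz.
  by rewrite (bigD1 i) //= Di mul0r.
have hp : forall j, 0 < DD (p j) x.
  move=> j; rewrite lt_def DD_ge0 andbT.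
  apply: contra B0 => /eqP Di; rewrite -sqrf_eq0 -/(Pp x) sp.
  by rewrite (bigD1 j) //= Di mul0r.
split => //.
have [PZ lnZ] := ln_prod hz; have [PP lnP] := ln_prod hp.
have K2 : 0 < K ^+ 2 by rewrite lt_def sqrf_eq0 K0 sqr_ge0.
have -> : ln (K * cRe (Pz x) / cRe (Pp x)) =
   2^-1 * ln ((K * cRe (Pz x) / cRe (Pp x)) ^+ 2).
  by rewrite lnXn // mulr2n; field.
rewrite expr_div_n exprMn -/(Pz x) -/(Pp x) sz sp.
rewrite ln_div; last 2 first.
- by rewrite posrE mulr_gt0.
- by rewrite posrE.
rewrite lnM; last 2 first.
- by rewrite posrE.
- by rewrite posrE.
rewrite lnZ lnP.
rewrite /F0 /ell -!mulr_sumr; ring.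
Qed.


Definition Fk (k : nat) (x : R) : R :=
  match k with
  | 0 => F0 x
  | k'.+1 => (-1) ^+ k' * (k'`!)%:R *
       (\sum_(i < m) cRe (uu (z i) x ^+ k) - \sum_(j < n) cRe (uu (p j) x ^+ k))
  end.

Lemma is_derive_Fk k x : (forall i, 0 < DD (z i) x) -> (forall j, 0 < DD (p j) x) ->
  is_derive x 1 (Fk k) (Fk k.+1 x).
Proof.
move=> hz hp; case: k => [|k].
  have h := is_derive_subf (is_derive_addf (is_derive_cstf (2^-1 * ln (K ^+ 2)) x)
     (is_derive_sumf (fun i => is_derive_ell (hz i))))
     (is_derive_sumf (fun j => is_derive_ell (hp j))).
  eapply is_derive_eq; [exact: h|].
  rewrite /= expr0 mul1r mul1r add0r; congr (_ - _); apply: eq_bigr => i _; by rewrite expr1.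
have dz := fun i => (is_derive_Uk k.+1 (lt0r_neq0 (hz i))).1.
have dp := fun j => (is_derive_Uk k.+1 (lt0r_neq0 (hp j))).1.
have h := is_derive_mulcf ((-1) ^+ k * (k`!)%:R) (is_derive_subf (is_derive_sumf dz) (is_derive_sumf dp)).
eapply is_derive_eq; [exact: h|].
have E : forall N (w : 'I_N -> R[i]) j,
    \sum_(i < N) cRe (- w i *+ j) = - (\sum_(i < N) cRe (w i)) *+ j.
  move=> N w j; rewrite -sumrN -sumrMnl; apply: eq_bigr => i _; by rewrite cReMn cReN.
rewrite /= !E -mulrnBl -mulr_natr factS natrM exprS; ring.
Qed.


Lemma key : LCM_H K z p -> forall s, (sigmaH p < s%:E)%E ->
  [/\ forall i, 0 < DD (z i) s, forall j, 0 < DD (p j) s &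
     forall k, \sum_(i < m) cRe (uu (z i) s ^+ k.+1) <= \sum_(j < n) cRe (uu (p j) s ^+ k.+1)].
Proof.
move=> L s Vs.
pose V : set R := fun s : R => (sigmaH p < s%:E)%E.
have posV : forall x, V x -> _ := fun x Vx => pos_DD (L x Vx).1.
have Vo : forall x, V x -> \forall y \near x, V y.
  move=> x; rewrite /V; case: (sigmaH p) => [r| |] hx.
  - rewrite lte_fin in hx.
    by apply: filterS (lt_nbhsr hx) => y; rewrite /= lte_fin.
  - by [].
  - by near=> y; exact: ltNyr.
have D := @iter_deriv R V (fun x => ln (ratH_real K z p x)) Fk Vo.
have D' := D (fun x Vx => let: And3 _ _ e := posV x Vx in e)
  (fun k x Vx => let: And3 a b _ := posV x Vx in is_derive_Fk k a b).
have [a b _] := posV s Vs.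
split => // k.
have := (L s Vs).2 k.+1 isT.
have e : (-1) ^+ k * (-1) ^+ k = 1 :> R by rewrite -exprMn mulrNN mulr1 expr1n.
rewrite (D' k.+1 s Vs) /= exprS mulN1r mulNr !mulrA e mul1r.
have : 0 < (k`!)%:R :> R by rewrite ltr0n fact_gt0.
move: (k`!)%:R => c; nra.
Unshelve. all: by end_near.
Qed.

End Main.


Section PA.
Variable R : realType.
Variables (m n : nat) (K : R) (z : 'I_m -> R[i]) (p : 'I_n -> R[i]).
Hypothesis K0 : K != 0.
Hypothesis Hz : real_coef_poly (root_poly z).
Hypothesis Hp : real_coef_poly (root_poly p).
Hypothesis L : LCM_H K z p.

Lemma sig_le (M : R) : (forall j, cRe (p j) <= M) -> (sigmaH p <= M%:E)%E.
Proof.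
move=> h; rewrite /sigmaH /max_re; apply: bigmax_le => //; first exact: leNye.
by move=> j _; rewrite lee_fin.
Qed.

Lemma in_V (s : R) : \sum_(j < n) `|cRe (p j)| < s -> (sigmaH p < s%:E)%E.
Proof.
move=> hs; apply: le_lt_trans (sig_le (M := \sum_(j < n) `|cRe (p j)|) _) _.
  move=> j; apply: le_trans (ler_norm _) _.
  by apply: le_sum_nonneg => i.
by rewrite lte_fin.
Qed.

Definition Tb (eps : R) (c a : R[i]) : R :=
  1 + (`|cRe c| + `|cIm c| * `|cIm a|) / eps + `|cRe a|.

Lemma Tb_ge0 eps c a : 0 < eps -> 0 <= Tb eps c a.
Proof.
move=> e0; rewrite /Tb addr_ge0 // addr_ge0 // divr_ge0 ?addr_ge0 ?mulr_ge0 //.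
exact: ltW.
Qed.

Lemma partA : (m <= n)%N.
Proof.
pose eps : R := ((m + n).+1%:R)^-1.
have e0 : 0 < eps by rewrite invr_gt0 ltr0n.
pose s := 1 + \sum_(j < n) `|cRe (p j)| + \sum_(i < m) Tb eps (z i) (z i)
             + \sum_(j < n) Tb eps (p j) (p j).
have sz0 : 0 <= \sum_(i < m) Tb eps (z i) (z i) by apply: sumr_ge0 => i _; exact: Tb_ge0.
have sp0 : 0 <= \sum_(j < n) Tb eps (p j) (p j) by apply: sumr_ge0 => i _; exact: Tb_ge0.
have sa0 : 0 <= \sum_(j < n) `|cRe (p j)| by apply: sumr_ge0 => i _.
have Vs : (sigmaH p < s%:E)%E by apply: in_V; rewrite /s; lra.
have s0 : 0 <= s by rewrite /s; lra.
have [hz hp hk] := key K0 Hz Hp L Vs.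
have H := hk 0%N.
move: H; rewrite (eq_bigr (fun i => cRe (uu (z i) s))); last by move=> *; rewrite expr1.
rewrite [X in _ <= X](eq_bigr (fun j => cRe (uu (p j) s))); last by move=> *; rewrite expr1.
move=> H; have H2 := ler_wpM2l s0 H; rewrite !mulr_sumr in H2.
rewrite (eq_bigr (fun i => 1 + cRe (z i * uu (z i) s))) in H2; last first.
  by move=> i _; rewrite suu // gt_eqF.
rewrite [X in _ <= X](eq_bigr (fun i => 1 + cRe (p i * uu (p i) s))) in H2; last first.
  by move=> i _; rewrite suu // gt_eqF.
rewrite !big_split /= !sumr_const !card_ord in H2.
have bz : forall i, `|cRe (z i * uu (z i) s)| <= eps.
  move=> i; have := le_sum_nonneg i (fun i => Tb_ge0 (z i) (z i) e0).
  move=> hle; apply: (eps_bound e0); move: hle; rewrite /s /Tb; lra.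
have bp : forall i, `|cRe (p i * uu (p i) s)| <= eps.
  move=> i; have := le_sum_nonneg i (fun i => Tb_ge0 (p i) (p i) e0).
  move=> hle; apply: (eps_bound e0); move: hle; rewrite /s /Tb; lra.
have [bz1 bz2] := sum_abs_bound bz; have [bp1 bp2] := sum_abs_bound bp.
have ee : m%:R * eps + n%:R * eps + eps = 1.
  have nE : ((m + n).+1)%:R = m%:R + n%:R + 1 :> R by rewrite mulrSr natrD.
  have nz : m%:R + n%:R + 1 != 0 :> R by rewrite -nE pnatr_eq0.
  by rewrite /eps nE; field.
rewrite leqNgt; apply/negP => lt.
have : (n.+1)%:R <= m%:R :> R by rewrite ler_nat.
rewrite mulrSr; lra.
Qed.
End PA.

Section PC.
Variable R : realType.

Lemma partC_re m (K : R) (z p : 'I_m -> R[i]) : K != 0 ->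
  real_coef_poly (root_poly z) -> real_coef_poly (root_poly p) -> LCM_H K z p ->
  \sum_(i < m) cRe (z i) <= \sum_(i < m) cRe (p i).
Proof.
move=> K0 Hz Hp L.
apply/ler_addgt0Pr => d d0.
pose eps : R := d / (2 * m%:R + 1).
have m0 : 0 <= m%:R :> R by [].
have e0 : 0 < eps by rewrite divr_gt0 //; lra.
have ed : 2 * m%:R * eps <= d.
  rewrite /eps mulrA ler_pdivrMr; last lra.
  have : 0 <= d by lra.
  nra.
pose s := 1 + \sum_(j < m) `|cRe (p j)| + \sum_(i < m) Tb eps (z i ^+ 2) (z i)
             + \sum_(j < m) Tb eps (p j ^+ 2) (p j).
have sz0 : 0 <= \sum_(i < m) Tb eps (z i ^+ 2) (z i) by apply: sumr_ge0 => i _; exact: Tb_ge0.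
have sp0 : 0 <= \sum_(j < m) Tb eps (p j ^+ 2) (p j) by apply: sumr_ge0 => i _; exact: Tb_ge0.
have sa0 : 0 <= \sum_(j < m) `|cRe (p j)| by apply: sumr_ge0 => i _.
have Vs : (sigmaH p < s%:E)%E by apply: in_V; rewrite /s; lra.
have s0 : 0 <= s by rewrite /s; lra.
have [hz hp hk] := key K0 Hz Hp L Vs.
have H := hk 0%N.
move: H; rewrite (eq_bigr (fun i => cRe (uu (z i) s))); last by move=> *; rewrite expr1.
rewrite [X in _ <= X](eq_bigr (fun j => cRe (uu (p j) s))); last by move=> *; rewrite expr1.
move=> H; have H2 := ler_wpM2l s0 (ler_wpM2l s0 H); rewrite !mulr_sumr in H2.
rewrite (eq_bigr (fun i => s + cRe (z i) + cRe (z i ^+ 2 * uu (z i) s))) in H2; last first.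
  by move=> i _; rewrite s2uu // gt_eqF.
rewrite [X in _ <= X](eq_bigr (fun i => s + cRe (p i) + cRe (p i ^+ 2 * uu (p i) s))) in H2; last first.
  by move=> i _; rewrite s2uu // gt_eqF.
rewrite !big_split /= !sumr_const !card_ord in H2.
have bz : forall i, `|cRe (z i ^+ 2 * uu (z i) s)| <= eps.
  move=> i; have := le_sum_nonneg i (fun i => Tb_ge0 (z i ^+ 2) (z i) e0).
  move=> hle; apply: (eps_bound e0); move: hle; rewrite /s /Tb; lra.
have bp : forall i, `|cRe (p i ^+ 2 * uu (p i) s)| <= eps.
  move=> i; have := le_sum_nonneg i (fun i => Tb_ge0 (p i ^+ 2) (p i) e0).
  move=> hle; apply: (eps_bound e0); move: hle; rewrite /s /Tb; lra.
have [bz1 bz2] := sum_abs_bound bz; have [bp1 bp2] := sum_abs_bound bp.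
lra.
Qed.

End PC.


Ltac eqnra := apply/eqP; rewrite eq_le; apply/andP; split; nra.

Section B.
Variable R : realType.
Implicit Types x y v w : R[i].

Definition Nc x : R := cRe x ^+ 2 + cIm x ^+ 2.

Lemma Nc_ge0 x : 0 <= Nc x.
Proof. by rewrite /Nc addr_ge0 ?sqr_ge0. Qed.

Lemma NcM x y : Nc (x * y) = Nc x * Nc y.
Proof. rewrite /Nc cReM cImM; ring. Qed.

Lemma NcX x k : Nc (x ^+ k) = Nc x ^+ k.
Proof.
elim: k => [|k IH]; first by rewrite !expr0 /Nc /= expr0n /= addr0 expr1n.
by rewrite !exprS NcM IH.
Qed.

Lemma Nc_uu a s : DD a s != 0 -> Nc (uu a s) = (DD a s)^-1.
Proof. by rewrite /Nc ReU ImU /DD => D0; field. Qed.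

Lemma Re_bound x j : `|cRe (x ^+ (2 * j))| <= Nc x ^+ j.
Proof.
have h1 : cRe (x ^+ (2 * j)) ^+ 2 <= (Nc x ^+ j) ^+ 2.
  rewrite -exprM mulnC -NcX /Nc lerDl; exact: sqr_ge0.
have h2 : 0 <= Nc x ^+ j by rewrite exprn_ge0 // Nc_ge0.
have h4 : `|cRe (x ^+ (2 * j))| ^+ 2 = cRe (x ^+ (2 * j)) ^+ 2 by rewrite real_normK // num_real.
have h3 := normr_ge0 (cRe (x ^+ (2 * j))).
set r := cRe (x ^+ (2 * j)) in h1 h3 h4 *. set t := Nc x ^+ j in h1 h2 *.
set a := `|r| in h3 h4 *.
nra.
Qed.

Lemma cheb v : Nc v = 1 -> exists2 j, (0 < j <= 4)%N & 8^-1 <= cRe (v ^+ j).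
Proof.
rewrite /Nc => h.
have e2 : cRe (v ^+ 2) = 2 * cRe v ^+ 2 - 1.
  rewrite expr2 cReM -!expr2; eqnra.
have i2 : cIm (v ^+ 2) = 2 * cRe v * cIm v by rewrite expr2 cImM; ring.
have hd : cIm v ^+ 2 = 1 - cRe v ^+ 2 by rewrite -h; ring.
have e3 : cRe (v ^+ 3) = cRe v * (4 * cRe v ^+ 2 - 3).
  rewrite exprS cReM e2 i2.
  have -> : cIm v * (2 * cRe v * cIm v) = 2 * cRe v * cIm v ^+ 2 by ring.
  rewrite hd; ring.
have e4 : cRe (v ^+ 4) = 2 * (2 * cRe v ^+ 2 - 1) ^+ 2 - 1.
  rewrite (_ : 4%N = (2 * 2)%N) // exprM expr2 cReM e2 i2.
  have -> : 2 * cRe v * cIm v * (2 * cRe v * cIm v) = 4 * cRe v ^+ 2 * cIm v ^+ 2 by ring.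
  rewrite hd; ring.
have [h1|h1] := lerP (8^-1) (cRe v); first by exists 1%N => //; rewrite expr1.
have [h2|h2] := lerP (9/16) (cRe v ^+ 2); first by exists 2%N => //; rewrite e2; nra.
have [h3|h3] := lerP (cRe v ^+ 2) (1/9).
  exists 4%N => //; rewrite e4.
  set c := cRe v in h1 h2 h3 *. nra.
exists 3%N => //; rewrite e3.
set c := cRe v in h1 h2 h3 *.
have hc : c < - (1/3) by nra.
nra.
Qed.

Lemma uu_conj (a : R[i]) (s : R) : uu (conjc a) s = conjc (uu a s).
Proof.
rewrite /uu conjc_inv; congr (_^-1); case: a => x y.
rewrite /real_complex_def /=.
by apply/eqP; rewrite eq_complex /=; apply/andP; split; apply/eqP; ring.
Qed.

Lemma Re_conjX (w : R[i]) k : cRe (conjc w ^+ k) = cRe (w ^+ k).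
Proof. by rewrite -rmorphXn /=; case: (w ^+ k). Qed.

Lemma geo_bound (q : R) N : 0 <= q <= 1 -> q ^+ N * (1 + N%:R * (1 - q)) <= 1.
Proof.
move=> /andP[q0 q1]; elim: N => [|N IH]; first by rewrite expr0 mul0r addr0 mul1r.
have qN : q ^+ N.+1 <= 1 by rewrite exprn_ile1.
have qN0 : 0 <= q ^+ N by rewrite exprn_ge0.
rewrite exprS mulrSr.
have h1 : q * (q ^+ N * (1 + N%:R * (1 - q))) <= q by rewrite ler_piMr.
have h2 : q ^+ N.+1 * (1 - q) <= 1 - q by rewrite ler_piMl // subr_ge0.
rewrite exprS in h2.
move: h1 h2; set t := q ^+ N; set u := N%:R => h1 h2.
have -> : q * t * (1 + (u + 1) * (1 - q)) = q * (t * (1 + u * (1 - q))) + q * t * (1 - q) by ring.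
lra.
Qed.

Lemma geo_small (q C c : R) : 0 <= q < 1 -> 0 <= C -> 0 < c ->
  exists N, (0 < N)%N /\ C * q ^+ N < c.
Proof.
move=> /andP[q0 q1] C0 c0.
pose N := (Num.truncn (C / (c * (1 - q)))).+1.
exists N; split => //.
have hq : 0 < 1 - q by lra.
have hN : C / (c * (1 - q)) < N%:R by exact: truncnS_gt.
have hN' : C < N%:R * (c * (1 - q)).
  by rewrite -ltr_pdivrMr // mulr_gt0.
have g := geo_bound N (_ : 0 <= q <= 1).
have {}g : q ^+ N * (1 + N%:R * (1 - q)) <= 1 by apply: g; rewrite q0 ltW.
have qN0 : 0 <= q ^+ N by rewrite exprn_ge0.
have N0 : 0 <= N%:R :> R by [].
rewrite ltNge; apply/negP => h.
have h3 : c * (1 + N%:R * (1 - q)) <= C * q ^+ N * (1 + N%:R * (1 - q)).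
  by rewrite ler_wpM2r // addr_ge0 // mulr_ge0 // ltW.
have h4 : C * q ^+ N * (1 + N%:R * (1 - q)) <= C.
  by rewrite -mulrA ler_piMr.
have hN2 : C < c * (N%:R * (1 - q)) by rewrite mulrCA.
rewrite mulrDr mulr1 in h3.
move: h3 h4 hN2; set t := N%:R * (1 - q); set u := C * q ^+ N * (1 + t); lra.
Qed.

Lemma star_contra (v : R[i]) (mu C q : R) : Nc v = 1 -> 1 <= mu -> 0 <= q < 1 -> 0 <= C ->
  (forall j, (0 < j)%N -> mu * cRe (v ^+ j) <= C * q ^+ j) -> False.
Proof.
move=> Nv mu1 /andP[q0 q1] C0 H.
have qq : 0 <= q < 1 by rewrite q0.
have C8 : 0 <= 8 * C by rewrite mulr_ge0.
have [N [N0 hN]] := geo_small qq C8 ltr01.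
have NvN : Nc (v ^+ N) = 1 by rewrite NcX Nv expr1n.
have [t /andP[t0 t4] ht] := cheb NvN.
rewrite -exprM in ht.
have jpos : (0 < N * t)%N by rewrite muln_gt0 N0 t0.
have := H _ jpos.
have qj : q ^+ (N * t) <= q ^+ N.
  by rewrite exprM -[X in _ <= X]expr1; apply: ler_wiXn2l => //; [apply: exprn_ge0 | apply: exprn_ile1 => //; exact: ltW].
have : C * q ^+ (N * t) <= C * q ^+ N by rewrite ler_wpM2l.
have : mu * 8^-1 <= mu * cRe (v ^+ (N * t)) by rewrite ler_wpM2l //; lra.
move: hN; rewrite -mulrA; set a := C * q ^+ N; set b := C * q ^+ (N * t); set r := cRe _.
lra.
Qed.

End B.


Section Hl.
Variable R : realType.
Lemma complex_ext (x y : R[i]) : cRe x = cRe y -> cIm x = cIm y -> x = y.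
Proof. by case: x => a b; case: y => c d /= -> ->. Qed.
Lemma ReJ (x : R[i]) : cRe (conjc x) = cRe x. Proof. by case: x. Qed.
Lemma ImJ (x : R[i]) : cIm (conjc x) = - cIm x. Proof. by case: x. Qed.
Lemma sum_pred_bound N (P : pred 'I_N) (F : 'I_N -> R) e : 0 <= e ->
  (forall i, P i -> `|F i| <= e) -> `|\sum_(i < N | P i) F i| <= N%:R * e.
Proof.
move=> e0 h; apply: le_trans (ler_norm_sum _ _ _) _.
apply: le_trans (_ : \sum_(i < N | P i) e <= _).
  by apply: ler_sum => i Pi; exact: h.
have -> : N%:R * e = \sum_(i < N) e by rewrite sumr_const card_ord mulr_natl.
rewrite big_mkcond /=.
by apply: ler_sum => i _; case: ifP.
Qed.
End Hl.

Section PB.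
Variable R : realType.
Variables (m n : nat) (K : R) (z : 'I_m -> R[i]) (p : 'I_n -> R[i]).
Hypothesis K0 : K != 0.
Hypothesis Hz : real_coef_poly (root_poly z).
Hypothesis Hp : real_coef_poly (root_poly p).
Hypothesis L : LCM_H K z p.

Lemma partB : (max_re z <= max_re p)%E.
Proof.
rewrite leNgt; apply/negP => hlt.
have m0 : (0 < m)%N.
  rewrite lt0n; apply/negP => /eqP m0.
  have : (max_re z <= -oo)%E.
    by apply: bigmax_le => // i _; have := ltn_ord i; rewrite {2}m0.
  rewrite leNgt => /negP; apply; apply: le_lt_trans hlt; exact: leNye.
pose j0 : 'I_m := Ordinal m0.
have [i0 _ E] := eq_bigmax (x := (-oo)%E) j0 predT (fun i => (cRe (z i))%:E) isT (fun i _ => leNye _).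
have E' : max_re z = (cRe (z i0))%:E by rewrite /max_re; exact: E.
set rho := cRe (z i0).
have hmax : forall i, cRe (z i) <= rho.
  by move=> i; have := le_bigmax (-oo)%E (fun i => (cRe (z i))%:E) i; rewrite -/(max_re z) E' lee_fin.
have hsig : (sigmaH p < rho%:E)%E by rewrite /sigmaH -E'.
have hprho : forall j, cRe (p j) < rho.
  move=> j; have := le_bigmax (-oo)%E (fun j => (cRe (p j))%:E) j.
  rewrite -/(max_re p) => h; have := le_lt_trans h hsig; by rewrite lte_fin.
case: (@arg_minP _ _ _ i0 (fun i => cRe (z i) == rho) (fun i => cIm (z i) ^+ 2) (eqxx rho)) => i1 /eqP Hi1 Hmin.
set a0 := z i1.
set b2 := cIm a0 ^+ 2.
pose good i := (z i == a0) || (z i == conjc a0).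
pose g (a : R[i]) : R := if cRe a < rho then `|cRe a| + b2 / (rho - cRe a) else 0.
have b20 : 0 <= b2 by rewrite sqr_ge0.
have g0 : forall a, 0 <= g a.
  move=> a; rewrite /g; case: ifP => // h; rewrite addr_ge0 // divr_ge0 //.
  by rewrite subr_ge0 ltW.
pose s := 1 + `|rho| + \sum_(i < m) g (z i) + \sum_(j < n) g (p j).
have sgz : 0 <= \sum_(i < m) g (z i) by apply: sumr_ge0.
have sgp : 0 <= \sum_(j < n) g (p j) by apply: sumr_ge0.
have rr := ler_norm rho.
have rn := normr_ge0 rho.
have s_rho : rho < s by rewrite /s; lra.
have Vs : (sigmaH p < s%:E)%E by apply: lt_trans hsig _; rewrite lte_fin.
have [hz hp hk] := key K0 Hz Hp L Vs.
set r0 := DD a0 s.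
have r0p : 0 < r0 := hz i1.
have far1 : forall a, cRe a < rho -> g a <= s - 1 - `|rho| -> r0 < DD a s.
  move=> a ha; rewrite /g ha => hg.
  have dp : 0 < rho - cRe a by rewrite subr_gt0.
  have w : (rho - cRe a) * (b2 / (rho - cRe a)) = b2 by rewrite mulrC divfK // gt_eqF.
  have ra := ler_norm (cRe a).
  have ia := sqr_ge0 (cIm a).
  have key1 : b2 / (rho - cRe a) < 2 * s - rho - cRe a by lra.
  have key2 : b2 < (rho - cRe a) * (2 * s - rho - cRe a).
    by rewrite -w ltr_pM2l.
  rewrite /r0 /DD Hi1 -/b2.
  have -> : (s - cRe a) ^+ 2 = (s - rho) ^+ 2 + (rho - cRe a) * (2 * s - rho - cRe a) by ring.
  lra.
have far2 : forall a, cRe a = rho -> b2 < cIm a ^+ 2 -> r0 < DD a s.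
  by move=> a ha hb; rewrite /r0 /DD Hi1 ha -/b2 ltrD2l.
have badz : forall i, ~~ good i -> r0 < DD (z i) s.
  move=> i ngi; have := hmax i; rewrite le_eqVlt => /orP[/eqP heq|hl].
  - apply: far2 => //.
    have := Hmin i (introT eqP heq); rewrite -/a0 -/b2 le_eqVlt => /orP[/eqP hb|//].
    exfalso; move: ngi; rewrite /good negb_or => /andP[/eqP n1 /eqP n2].
    move: hb; rewrite /b2 => /eqP; rewrite eq_sym eqf_sqr => /orP[/eqP h1|/eqP h1].
    + by apply: n1; apply: complex_ext => //; rewrite heq Hi1.
    + by apply: n2; apply: complex_ext; rewrite ?ReJ ?ImJ // heq Hi1.
  - apply: far1 => //.
    have := le_sum_nonneg i (fun i => g0 (z i)); rewrite /s; lra.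
have badp : forall j, r0 < DD (p j) s.
  move=> j; apply: far1 (hprho j) _.
  have := le_sum_nonneg j (fun j => g0 (p j)); rewrite /s; lra.
pose qz := \big[Order.max/0]_(i | ~~ good i) (r0 / DD (z i) s).
pose qp := \big[Order.max/0]_(j < n) (r0 / DD (p j) s).
pose q := Order.max qz qp.
have rz : forall i, ~~ good i -> 0 <= r0 / DD (z i) s < 1.
  move=> i gi; have := badz i gi => h.
  by rewrite divr_ge0 ?ltW //= ltr_pdivrMr ?mul1r // (lt_trans r0p).
have rp : forall j, 0 <= r0 / DD (p j) s < 1.
  move=> j; have := badp j => h.
  by rewrite divr_ge0 ?ltW //= ltr_pdivrMr ?mul1r // (lt_trans r0p).
have q1 : q < 1.
  rewrite /q gt_max; apply/andP; split.
  - by apply: bigmax_lt => // i gi; have /andP[] := rz i gi.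
  - by apply: bigmax_lt => // j _; have /andP[] := rp j.
have q0 : 0 <= q.
  rewrite /q le_max; apply/orP; left; rewrite /qz.
  by apply/bigmax_geP; left.
have qzb : forall i, ~~ good i -> r0 / DD (z i) s <= q.
  move=> i gi; apply: le_trans (le_bigmax_cond 0 (P := fun i => ~~ good i) (fun i => r0 / DD (z i) s) gi) _.
  by rewrite le_max lexx.
have qpb : forall j, r0 / DD (p j) s <= q.
  move=> j; apply: le_trans (le_bigmax 0 (fun j => r0 / DD (p j) s) j) _.
  by rewrite le_max lexx orbT.
set w := uu a0 s.
pose v := r0%:C * w ^+ 2.
have Nw : Nc w = r0^-1 by rewrite /w Nc_uu // gt_eqF.
have Nv : Nc v = 1.
  rewrite /v NcM NcX Nw /Nc /= expr0n /= addr0 -exprMn mulfV ?expr1n // ?gt_eqF //.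
pose mu : R := \sum_(i < m | good i) 1.
have mu1 : 1 <= mu.
  have gi1 : good i1 by rewrite /good eqxx.
  rewrite /mu (bigD1 i1) //= lerDl; exact: sumr_ge0.
apply: (star_contra (mu := mu) (C := (m + n)%:R) (q := q) Nv mu1 _ _) => [||j jpos].
- by rewrite q0 q1.
- by [].
have j2 : (0 < 2 * j)%N by rewrite muln_gt0 jpos.
have H := hk (2 * j).-1; rewrite prednK // in H.
rewrite (bigID good) /= in H.
have Eg : \sum_(i < m | good i) cRe (uu (z i) s ^+ (2 * j)) = mu * cRe (w ^+ (2 * j)).
  rewrite /mu mulr_suml; apply: eq_bigr => i /orP[/eqP->|/eqP->]; rewrite mul1r //.
  by rewrite uu_conj Re_conjX.
rewrite Eg in H.
have rj : 0 <= r0 ^+ j by rewrite exprn_ge0 // ltW.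
have each : forall a, r0 < DD a s -> r0 / DD a s <= q ->
    `|r0 ^+ j * cRe (uu a s ^+ (2 * j))| <= q ^+ j.
  move=> a ha hq.
  have Dp : 0 < DD a s by apply: lt_trans ha.
  rewrite normrM (ger0_norm rj).
  apply: le_trans (_ : r0 ^+ j * Nc (uu a s) ^+ j <= _).
    by rewrite ler_wpM2l // Re_bound.
  rewrite Nc_uu ?gt_eqF // -exprMn; apply: lerXn2r => //.
  all: rewrite ?inE /= ?nnegrE //. all: try (by rewrite mulr_ge0 // ?invr_ge0 ltW).

have Bz : `|\sum_(i < m | ~~ good i) (r0 ^+ j * cRe (uu (z i) s ^+ (2 * j)))| <= m%:R * q ^+ j.
  apply: sum_pred_bound; first by rewrite exprn_ge0.
  by move=> i gi; apply: each; [exact: badz | exact: qzb].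
have [Bp1 Bp2] := sum_abs_bound (fun jj => each (p jj) (badp jj) (qpb jj)).
have H2 := ler_wpM2l rj H.
rewrite mulrDr !mulr_sumr in H2.
have Ev : r0 ^+ j * (mu * cRe (w ^+ (2 * j))) = mu * cRe (v ^+ j).
  rewrite /v exprMn -exprM -rmorphXn /= cReMs; ring.
rewrite Ev in H2.
move: Bz; rewrite ler_norml => /andP[Bz1 Bz2].
rewrite natrD mulrDl; lra.
Qed.
End PB.

Theorem proposition3 (R : realType) (m n : nat) (K : R)
  (z : 'I_m -> R[i]) (p : 'I_n -> R[i]) :
  K != 0 ->
  real_coef_poly (root_poly z) ->
  real_coef_poly (root_poly p) ->
  (forall (i : 'I_m) (j : 'I_n), z i != p j) ->
  LCM_H K z p ->
  [/\ (m <= n)%N,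
      (max_re z <= max_re p)%E &
      (forall e : m = n,
         \sum_(i < m) z i <= \sum_(i < n) p i)].
Proof.
move=> K0 Hz Hp _ L; split.
- exact: partA K0 Hz Hp L.
- exact: partB K0 Hz Hp L.
- move=> e; subst n.
  rewrite lecE; apply/andP; split.
  + by rewrite (Im_sum_roots Hz) (Im_sum_roots Hp).
  + rewrite !cRe_sum; exact: partC_re K0 Hz Hp L.
Qed.
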